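(* Let $\mu$ be a left fuzzy $\Gamma$-hyperideal of a fuzzy $\Gamma$-hypersemigroup $(M,\circ)$. Then (i) $\mu\circ\gamma\circ m$ is a left fuzzy $\Gamma$-hyperideal of $(M,\circ)$ for all $m\in M$, $\gamma\in\Gamma$; (ii) $\mu\circ\gamma\circ\chi_M$ is a left fuzzy $\Gamma$-hyperideal of $(M,\circ)$ for all $\gamma\in\Gamma$.
   Context: $M,\Gamma$ are nonempty sets; a fuzzy subset of $M$ is a map $M\to[0,1]$. A fuzzy $\Gamma$-hyperoperation assigns to each $(a,\gamma,b)\in M\times\Gamma\times M$ a fuzzy subset $a\circ\gamma\circ b$. For $a\in M$ and fuzzy $\mu$: $(a\circ\gamma\circ\mu)(r)=\bigvee_{t\in M}((a\circ\gamma\circ t)(r)\wedge\mu(t))$ if $\mu\ne0$, else $0$; $(\mu\circ\gamma\circ a)(r)=\bigvee_{t\in M}(\mu(t)\wedge(t\circ\gamma\circ a)(r))$ if $\mu\ne0$, else $0$. For fuzzy $\mu,\nu$: $(\mu\circ\gamma\circ\nu)(t)=\bigvee_{p,q\in M}(\mu(p)\wedge(p\circ\gamma\circ q)(t)\wedge\nu(q))$. $(M,\circ)$ is a fuzzy $\Gamma$-hypersemigroup if $(a\circ\alpha\circ b)\circ\beta\circ c=a\circ\alpha\circ(b\circ\beta\circ c)$ for all $a,b,c\in M$, $\alpha,\beta\in\Gamma$. $\chi_M$ is the constant function $1$ on $M$. For fuzzy sets, $\mu\subseteq\nu$ means $\mu(x)\le\nu(x)$ for all $x$. A fuzzy subset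 $\mu$ is a left fuzzy $\Gamma$-hyperideal if $a\circ\gamma\circ\mu\subseteq\mu$ for all $a\in M$, $\gamma\in\Gamma$. *)

(* Defs.v *)
(* membership degrees live in [0,1] of a realType R;
   \bigvee is the supremum [sup] of classical reals. *)
From HB Require Import structures.
From mathcomp Require Import all_boot all_order all_algebra.
From mathcomp Require Import boolp classical_sets reals.
Set Implicit Arguments. Unset Strict Implicit. Unset Printing Implicit Defensive.
Import Order.TTheory GRing.Theory Num.Theory.
Local Open Scope ring_scope.
Local Open Scope classical_set_scope.

Section FuzzyGamma.
Variables (R : realType) (M G : Type).

Definition is_fuzzy (mu : M -> R) : Prop := forall x, 0 <= mu x <= 1.

Definition fuzzy_hyperop (op : M -> G -> M -> M -> R) : Prop :=
  forall a g b, is_fuzzy (op a g b).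

Definition fzero (mu : M -> R) : Prop := forall x, mu x = 0.

Definition elt_fz (op : M -> G -> M -> M -> R) (a : M) (g : G) (mu : M -> R)
  : M -> R := fun r =>
  if `[< fzero mu >] then 0
  else sup [set Num.min (op a g t r) (mu t) | t in [set: M]].

Definition fz_elt (op : M -> G -> M -> M -> R) (mu : M -> R) (g : G) (a : M)
  : M -> R := fun r =>
  if `[< fzero mu >] then 0
  else sup [set Num.min (mu t) (op t g a r) | t in [set: M]].

Definition fz_fz (op : M -> G -> M -> M -> R) (mu : M -> R) (g : G) (nu : M -> R)
  : M -> R := fun t =>
  sup [set Num.min (Num.min (mu pq.1) (op pq.1 g pq.2 t)) (nu pq.2)
      | pq in [set: M * M]].

Definition fuzzy_hypersemigroup (op : M -> G -> M -> M -> R) : Prop :=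
  fuzzy_hyperop op /\
  forall (a b c : M) (al be : G),
    fz_elt op (op a al b) be c = elt_fz op a al (op b be c).

Definition chiM : M -> R := fun _ => 1.

Definition fsubset (mu nu : M -> R) : Prop := forall x, mu x <= nu x.

Definition left_fuzzy_hyperideal (op : M -> G -> M -> M -> R) (mu : M -> R)
  : Prop :=
  is_fuzzy mu /\ forall (a : M) (g : G), fsubset (elt_fz op a g mu) mu.

End FuzzyGamma.

(* Main.v *)
Require Import Defs.
From HB Require Import structures.
From mathcomp Require Import all_boot all_order all_algebra.
From mathcomp Require Import boolp classical_sets reals.
Import Order.TTheory GRing.Theory Num.Theory.
Local Open Scope ring_scope.
Local Open Scope classical_set_scope.

Section Help.
Variable R : realType.

Lemma ge_min_l (x y : R) : Num.min x y <= x. Proof. by rewrite ge_min lexx. Qed.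
Lemma ge_min_r (x y : R) : Num.min x y <= y. Proof. by rewrite ge_min lexx orbT. Qed.

Lemma le_sup1 (E : set R) (x b : R) : (forall y, E y -> y <= b) -> E x -> x <= sup E.
Proof. move=> ub Ex; apply: (ub_le_sup _ Ex); by exists b. Qed.

Lemma min_sup_le (c b : R) (E : set R) : E !=set0 ->
  (forall x, E x -> Num.min c x <= b) -> Num.min c (sup E) <= b.
Proof.
move=> ne H.
have [cb|bc] := leP c b; first by rewrite (le_trans (ge_min_l _ _)).
have Hs : sup E <= b.
  apply: ge_sup => // x Ex; have := H x Ex.
  by case: (leP c x) => cx; [move=> /(lt_le_trans bc); rewrite ltxx|].
by rewrite (le_trans (ge_min_r _ _)).
Qed.

Lemma sup_ge0 (E : set R) x : E x -> (forall y, E y -> 0 <= y <= 1) -> 0 <= sup E <= 1.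
Proof.
move=> Ex H; apply/andP; split.
  have /andP[x0 _] := H x Ex; apply: le_trans x0 _; apply: (le_sup1 _ _ 1) => // y /H /andP[] //.
apply: ge_sup; first by exists x.
by move=> y /H /andP[].
Qed.

End Help.
Arguments le_sup1 {R E x} b.
Arguments sup_ge0 {R E} x.
Arguments ge_min_l {R}.
Arguments ge_min_r {R}.
Arguments min_sup_le {R}.

Theorem theorem4p7 (R : realType) (M G : Type) (m0 : M) (g0 : G)
  (op : M -> G -> M -> M -> R) (mu : M -> R) :
  fuzzy_hypersemigroup op ->
  left_fuzzy_hyperideal op mu ->
  (forall (m : M) (g : G), left_fuzzy_hyperideal op (fz_elt op mu g m)) /\
  (forall g : G, left_fuzzy_hyperideal op (fz_fz op mu g (@chiM R M))).
Proof.
move=> [opf assoc] [muf muid].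
have opb : forall a g b x, op a g b x <= 1 by move=> a g b x; case/andP: (opf a g b x).
have op0 : forall a g b x, 0 <= op a g b x by move=> a g b x; case/andP: (opf a g b x).
have mub : forall x, mu x <= 1 by move=> x; case/andP: (muf x).
have mu0 : forall x, 0 <= mu x by move=> x; case/andP: (muf x).
have minb : forall x y : R, x <= 1 -> y <= 1 -> 0 <= x -> 0 <= y -> 0 <= Num.min x y <= 1.
  move=> x y x1 y1 x0 y0; apply/andP; split; first by rewrite le_min x0 y0.
  by rewrite (le_trans (ge_min_l _ _)).
have muI : forall a g s u, ~ fzero mu -> Num.min (op a g s u) (mu s) <= mu u.
  move=> a g s u nz; apply: le_trans (muid a g u); rewrite /elt_fz asboolF //.
  apply: (le_sup1 1); last by exists s.
  by move=> y [t _ <-]; rewrite (le_trans (ge_min_r _ _)).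
have asb : forall a g' p g q t r,
    Num.min (op a g' t r) (op p g q t) <= fz_elt op (op a g' p) g q r.
  move=> a g' p g q t r; rewrite assoc /elt_fz.
  case: ifPn => [/asboolP z|/asboolPn nz]; first by rewrite z ge_min_r.
  apply: (le_sup1 1); last by exists t.
  by move=> y [t' _ <-]; rewrite (le_trans (ge_min_l _ _)).
split.
- move=> m g.
  have fzf : is_fuzzy (fz_elt op mu g m).
    move=> x; rewrite /fz_elt; case: ifP => _; first by rewrite lexx ler01.
    apply: (sup_ge0 (Num.min (mu m0) (op m0 g m x))); first by exists m0.
    by move=> y [t _ <-]; apply: minb.
  split => // a g' r.
  rewrite /elt_fz; case: ifPn => [_|/asboolPn nzn]; first by case/andP: (fzf r).
  have nzm : ~ fzero mu.
    by move=> z; apply: nzn => x; rewrite /fz_elt asboolT.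
  have nuE : forall x, fz_elt op mu g m x =
      sup [set Num.min (mu t) (op t g m x) | t in [set: M]].
    by move=> x; rewrite /fz_elt asboolF.
  apply: ge_sup; first by exists (Num.min (op a g' m0 r) (fz_elt op mu g m m0)), m0.
  move=> _ [t _ <-]; rewrite nuE.
  apply: min_sup_le; first by exists (Num.min (mu m0) (op m0 g m t)), m0.
  move=> _ [s _ <-].
  rewrite minA (minC _ (mu s)) -minA.
  have h1 := asb a g' s g m t r.
  apply: le_trans (le_min2 (lexx (mu s)) h1) _.
  rewrite {1}/fz_elt; case: ifPn => [_|_].
    by apply: le_trans (ge_min_r _ _) _; case/andP: (fzf r).
  apply: min_sup_le; first by exists (Num.min (op a g' s m0) (op m0 g m r)), m0.
  move=> _ [u _ <-].
  rewrite nuE minA; apply: le_trans (_ : Num.min (mu u) (op u g m r) <= _).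
    by rewrite le_min ge_min_r andbT; apply: le_trans (ge_min_l _ _) _; rewrite minC muI.
  apply: (le_sup1 1); last by exists u.
  by move=> y [t' _ <-]; rewrite (le_trans (ge_min_l _ _)).
- move=> g.
  have fzE : forall x, fz_fz op mu g (@chiM R M) x =
      sup [set Num.min (Num.min (mu pq.1) (op pq.1 g pq.2 x)) 1 | pq in [set: M * M]] by [].
  have fzf : is_fuzzy (fz_fz op mu g (@chiM R M)).
    move=> x; rewrite fzE.
    apply: (sup_ge0 (Num.min (Num.min (mu m0) (op m0 g m0 x)) 1)); first by exists (m0, m0).
    by move=> y [[p q] _ <-]; apply: minb; rewrite ?ler01 ?lexx // ?le_min ?mu0 ?op0 // (le_trans (ge_min_l _ _)).
  split => // a g' r.
  rewrite /elt_fz; case: ifPn => [_|_]; first by case/andP: (fzf r).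
  apply: ge_sup; first by exists (Num.min (op a g' m0 r) (fz_fz op mu g (@chiM R M) m0)), m0.
  move=> _ [t _ <-]; rewrite fzE.
  apply: min_sup_le; first by exists (Num.min (Num.min (mu m0) (op m0 g m0 t)) 1), (m0, m0).
  move=> _ [[p q] _ <-] /=.
  have xi0 : 0 <= fz_fz op mu g (@chiM R M) r by case/andP: (fzf r).
  have [zm|nzm] := pselect (fzero mu).
    apply: le_trans xi0; rewrite ge_min; apply/orP; right.
    by rewrite ge_min; apply/orP; left; rewrite ge_min zm lexx.
  apply: le_trans (_ : Num.min (mu p) (Num.min (op a g' t r) (op p g q t)) <= _).
    by rewrite !le_min !ge_min !lexx !orbT.
  apply: le_trans (le_min2 (lexx (mu p)) (asb a g' p g q t r)) _.
  rewrite {1}/fz_elt; case: ifPn => [_|_].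
    by apply: le_trans (ge_min_r _ _) _.
  apply: min_sup_le; first by exists (Num.min (op a g' p m0) (op m0 g q r)), m0.
  move=> _ [u _ <-].
  rewrite minA; apply: le_trans (_ : Num.min (Num.min (mu u) (op u g q r)) 1 <= _).
    have h2 : Num.min (Num.min (mu p) (op a g' p u)) (op u g q r) <= Num.min (mu u) (op u g q r).
      rewrite le_min ge_min_r andbT.
      by apply: le_trans (ge_min_l _ _) _; rewrite minC muI.
    by rewrite le_min h2 /= (le_trans (ge_min_r _ _)).
  rewrite fzE; apply: (le_sup1 1); last by exists (u, q).
  by move=> y [t' _ <-]; rewrite (le_trans (ge_min_r _ _)).
Qed.
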